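(* For every $d\in\mathbb{N}$, $d\ge1$, we have $\mathcal H_1^d\subset\mathcal N_d=b_d^{-1}(\mathcal H_1^d)$.
   Context: Identify $b=(b_1,\dots,b_d)\in\mathbb{R}^d$ with the monic polynomial $z^d+\sum_{k=1}^d b_k z^{d-k}$, and let $\mathcal H_1^d\subset\mathbb{R}^d$ be the set of $b$ for which this polynomial is hyperbolic (has only real roots). A sequence $a=(a_1,\dots,a_d)\in\mathbb{R}^d$ is a Nuij sequence if for every hyperbolic polynomial $p\in\mathbb{R}[z]$ of degree $d$, the polynomial $p(z)+\sum_{k=1}^d a_k s^k p^{(k)}(z)$ is hyperbolic for every $s\in\mathbb{R}$; $\mathcal N_d$ is the set of Nuij sequences in $\mathbb{R}^d$. The linear map $b_d:\mathbb{R}^d\to\mathbb{R}^d$ is $b_d(a_1,\dots,a_d)=\big(da_1,\dots,\tfrac{d!}{(d-k)!}a_k,\dots,d!\,a_d\big)$. *)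

(* Defs.v *)
From mathcomp Require Import all_boot all_order all_algebra.
From mathcomp Require Import reals.
Set Implicit Arguments. Unset Strict Implicit. Unset Printing Implicit Defensive.
Import Order.TTheory GRing.Theory Num.Theory.
Local Open Scope ring_scope.

(* A real polynomial is hyperbolic if all its (complex) roots are real,
   i.e. it splits into real linear factors over R. *)
Definition hyperbolic (R : realType) (p : {poly R}) : Prop :=
  exists s : seq R, p = lead_coef p *: \prod_(x <- s) ('X - x%:P).

(* b = (b_1,...,b_d) (stored 0-based: b 0 k = b_{k+1}) |-> z^d + sum_k b_k z^(d-k) *)
Definition monic_of (R : realType) (d : nat) (b : 'rV[R]_d) : {poly R} :=
  'X^d + \sum_(k < d) b 0 k *: 'X^(d - k.+1).

Definition H1 (R : realType) (d : nat) (b : 'rV[R]_d) : Prop :=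
  hyperbolic (monic_of b).

(* Nuij sequences N_d: a = (a_1,...,a_d) stored 0-based. *)
Definition Nuij (R : realType) (d : nat) (a : 'rV[R]_d) : Prop :=
  forall p : {poly R}, size p = d.+1 -> hyperbolic p ->
    forall s : R,
      hyperbolic (p + \sum_(k < d) (a 0 k * s ^+ k.+1) *: p^`(k.+1)).

(* b_d(a)_k = d!/(d-k)! a_k (k = 1..d); d!/(d-k)! is the falling factorial d ^_ k *)
Definition bmap (R : realType) (d : nat) (a : 'rV[R]_d) : 'rV[R]_d :=
  \row_(k < d) ((d ^_ k.+1)%:R * a 0 k).

(* Main.v *)
Require Import Defs.
From mathcomp Require Import all_boot all_order all_algebra.
From mathcomp Require Import reals.
From mathcomp Require Import ring lra zify.
From mathcomp.real_closed Require Import complex.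
Import Order.TTheory GRing.Theory Num.Theory.

Notation cRe := (@complex.Re _).
Notation cIm := (@complex.Im _).

Section Helpers.
Local Open Scope ring_scope.
Local Open Scope complex_scope.

Lemma logder (K : fieldType) (ys : seq K) (w : K) :
  (forall y, y \in ys -> w != y) ->
  (\prod_(y <- ys) ('X - y%:P))^`().[w] =
  (\prod_(y <- ys) ('X - y%:P)).[w] * \sum_(y <- ys) (w - y)^-1.
Proof.
elim: ys => [|y ys IH] H; first by rewrite !big_nil derivC !hornerE.
have Hy : w - y != 0 by rewrite subr_eq0; apply: H; rewrite inE eqxx.
rewrite !big_cons derivM derivXsubC mul1r !hornerE IH; last first.
  by move=> z zin; apply: H; rewrite inE zin orbT.
set P := (\prod_(_ <- _) _).[w]; set S := \sum_(_ <- _) _.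
rewrite mulrDr mulrAC mulfV // mul1r; ring.
Qed.

Section Cx.
Variable R : realType.
Local Notation C := (R[i]).
Local Notation toC := (real_complex R).

Lemma cImV (v : C) : cIm (v^-1) = - cIm v / (cRe v ^+ 2 + cIm v ^+ 2).
Proof. case: v => a b /=. by rewrite mulNr. Qed.
Lemma cReV (v : C) : cRe (v^-1) = cRe v / (cRe v ^+ 2 + cIm v ^+ 2).
Proof. by case: v. Qed.
Lemma cImD (u v : C) : cIm (u + v) = cIm u + cIm v. Proof. by case: u; case: v. Qed.
Lemma cReD (u v : C) : cRe (u + v) = cRe u + cRe v. Proof. by case: u; case: v. Qed.
Lemma cImM (u v : C) : cIm (u * v) = cRe u * cIm v + cIm u * cRe v. Proof. by case: u => ??; case: v => ?? /=. Qed.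
Lemma cReM (u v : C) : cRe (u * v) = cRe u * cRe v - cIm u * cIm v. Proof. by case: u => ??; case: v => ?? /=. Qed.
Lemma cIm_sum (I : Type) (s : seq I) (F : I -> C) : cIm (\sum_(i <- s) F i) = \sum_(i <- s) cIm (F i).
Proof. exact: (big_morph _ cImD). Qed.
Lemma cRe_sum (I : Type) (s : seq I) (F : I -> C) : cRe (\sum_(i <- s) F i) = \sum_(i <- s) cRe (F i).
Proof. exact: (big_morph _ cReD). Qed.
Lemma cImB (u v : C) : cIm (u - v) = cIm u - cIm v. Proof. by case: u; case: v. Qed.
Lemma cReB (u v : C) : cRe (u - v) = cRe u - cRe v. Proof. by case: u; case: v. Qed.
Lemma cImn (n : nat) : cIm (n%:R : C) = 0. Proof. by rewrite -(rmorph_nat toC). Qed.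
Lemma cRen (n : nat) : cRe (n%:R : C) = n%:R. Proof. by rewrite -(rmorph_nat toC). Qed.

Lemma hyp_of_roots (p : {poly R}) :
  (forall z : C, root (map_poly toC p) z -> cIm z = 0) -> hyperbolic p.
Proof.
move=> H.
have [->|p0] := eqVneq p 0.
  by exists [::]; rewrite lead_coef0 scale0r.
have [rs Hrs] := closed_field_poly_normal (map_poly toC p).
have pC0 : map_poly toC p != 0 by rewrite map_poly_eq0.
have real_rs : forall z, z \in rs -> z = (cRe z)%:C.
  move=> z zin; have : root (map_poly toC p) z.
    rewrite Hrs rootZ ?lead_coef_eq0 // root_prod_XsubC //.
  by move/H; case: z {zin} => a b /= ->.
exists (map cRe rs).
apply: (map_poly_inj toC).
rewrite [LHS]Hrs map_polyZ lead_coef_map /= rmorph_prod big_map.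
congr (_ *: _); apply: eq_big_seq => z zin.
by rewrite /= map_polyXsubC /= -real_rs.
Qed.

Lemma roots_of_hyp (p : {poly R}) : p != 0 -> hyperbolic p ->
  forall z : C, root (map_poly toC p) z -> cIm z = 0.
Proof.
move=> p0 [s Hs] z.
rewrite Hs map_polyZ rootZ; last by rewrite fmorph_eq0 lead_coef_eq0.
rewrite rmorph_prod /= (eq_bigr (fun x => 'X - (toC x)%:P)); last first.
  by move=> x _; rewrite map_polyXsubC.
rewrite -(big_map toC predT (fun x => 'X - x%:P)) root_prod_XsubC.
by case/mapP => x _ ->.
Qed.

Lemma root_conj (p : {poly R}) (z : C) :
  root (map_poly toC p) z -> root (map_poly toC p) z^*.
Proof.
rewrite -complex_root_conj -map_poly_comp.
have -> : map_poly (conjc \o toC) p = map_poly toC p.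
  by apply: eq_map_poly => x /=; rewrite /conjc /= oppr0.
done.
Qed.

End Cx.


Lemma sum_neg (R : realDomainType) (I : eqType) (s : seq I) (F : I -> R) :
  s != [::] -> (forall i, i \in s -> F i < 0) -> \sum_(i <- s) F i < 0.
Proof.
elim: s => [|x s IH] // _ H; rewrite big_cons.
have Hx : F x < 0 by apply: H; rewrite inE eqxx.
have [->|sn] := eqVneq s [::]; first by rewrite big_nil addr0.
have : \sum_(i <- s) F i < 0 by apply: IH => // i ii; apply: H; rewrite inE ii orbT.
lra.
Qed.

Section Cx2.
Variable R : realType.
Local Notation C := (R[i]).
Local Notation toC := (real_complex R).

Lemma Im_inv_neg (v : C) : 0 < cIm v -> cIm (v^-1) < 0.
Proof.
move=> Hv; rewrite cImV mulNr oppr_lt0 divr_gt0 //.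
by apply: ltr_wpDl; [exact: sqr_ge0 | exact: exprn_gt0].
Qed.

Lemma stab_psi (q : {poly C}) (c : R) :
  (forall w, 0 < cIm w -> ~~ root q w) ->
  forall w, 0 < cIm w -> ~~ root (q - (c%:C) *: q^`()) w.
Proof.
move=> Hq w Hw.
have q0 : q != 0.
  apply/negP => /eqP q0; have := Hq 'i%C; by rewrite q0 root0 /=; move/(_ ltr01).
have [rs Hrs] := @closed_field_poly_normal (R[i] : closedFieldType) q.
have lc0 : lead_coef q != 0 by rewrite lead_coef_eq0.
have Hy : forall y, y \in rs -> w != y /\ 0 < cIm (w - y).
  move=> y yin; have : root q y by rewrite Hrs rootZ // root_prod_XsubC.
  have [Hy|Hy] := ltrP 0 (cIm y); first by move: (Hq y Hy) => /negP.
  move=> _; split; last by rewrite cImB; lra.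
  by apply/eqP => E; move: Hy; rewrite -E; lra.
have Hqw := Hq w Hw; rewrite /root in Hqw.
set S := \sum_(y <- rs) (w - y)^-1.
have Hd : q^`().[w] = q.[w] * S.
  rewrite Hrs derivZ !hornerZ logder; first by rewrite mulrA.
  by move=> y /Hy [].
rewrite /root !hornerE Hd.
apply/negP => /eqP E.
have E2 : c%:C * S = 1.
  have : q.[w] * (1 - c%:C * S) = 0 by rewrite mulrBr mulr1 mulrCA -E; ring.
  by move/eqP; rewrite mulf_eq0 (negbTE Hqw) /= subr_eq0 => /eqP <-.
have : cIm (c%:C * S) = 0 by rewrite E2.
rewrite cImM /= mul0r addr0 => /eqP; rewrite mulf_eq0 => /orP [/eqP c0|/eqP IS].
  by move: E2; rewrite c0 mul0r => /eqP; rewrite eq_sym oner_eq0.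
have [rs0|rsn] := eqVneq rs [::].
  by move: E2; rewrite /S rs0 big_nil mulr0 => /eqP; rewrite eq_sym oner_eq0.
have : cIm S < 0.
  rewrite /S cIm_sum; apply: sum_neg => // y yin.
  by apply: Im_inv_neg; case: (Hy y yin).
by rewrite IS ltxx.
Qed.

End Cx2.


Lemma shift_sum (K : comNzRingType) (V : lmodType K) n (u w : nat -> K) (A : nat -> V) :
  \sum_(j < n) (u j *: A j + w j *: A j.+1) =
  \sum_(j < n.+1) ((if (j < n)%N then u j else 0) + (if (j : nat) is j'.+1 then w j' else 0)) *: A j.
Proof.
rewrite big_split /= [RHS](eq_bigr (fun j : 'I_n.+1 => (if (j < n)%N then u j else 0) *: A j +
   (if nat_of_ord j is j'.+1 then w j' else 0) *: A j)); last by move=> j _; rewrite scalerDl.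
rewrite big_split /= big_ord_recr /= ltnn scale0r addr0 big_ord_recl /= scale0r add0r.
by congr (_ + _); apply: eq_bigr => j _ /=; rewrite ?ltn_ord.
Qed.

Lemma coefMXsubC (K : comNzRingType) (x : K) (G : {poly K}) i :
  (('X - x%:P) * G)`_i = (if i is i'.+1 then G`_i' else 0) - x * G`_i.
Proof. by rewrite mulrBl coefB coefXM coefCM; case: i. Qed.

Fixpoint Psi {K : fieldType} (s : K) (r : seq K) (q : {poly K}) : {poly K} :=
  match r with [::] => q | x :: r' => Psi s r' (q - (s * x) *: q^`()) end.

Lemma Psi_id (K : fieldType) (s : K) (r : seq K) (q : {poly K}) :
  Psi s r q = \sum_(j < (size r).+1)
     (s ^+ j * (\prod_(x <- r) ('X - x%:P))`_(size r - j)) *: q^`(j).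
Proof.
elim: r q => [|x r IH] q /=.
  by rewrite big_ord_recl big_ord0 addr0 big_nil coefC /= mulr1 scale1r.
rewrite IH.
set G := \prod_(y <- r) ('X - y%:P).
have Gs : size G = (size r).+1 by rewrite size_prod_XsubC.
have GN : G`_(size r).+1 = 0 by rewrite nth_default // Gs.
rewrite (eq_bigr (fun j : 'I_(size r).+1 => (s ^+ j * G`_(size r - j)) *: q^`(j) +
      (- (s ^+ j * G`_(size r - j)) * (s * x)) *: (q^`(j))^`())); last first.
  by move=> j _; rewrite derivnB derivnZ -derivSn derivnS scalerBr scalerA -scaleNr mulNr mulrC.
have := @shift_sum _ _ (size r).+1 (fun j => s ^+ j * G`_(size r - j)) (fun j => - (s ^+ j * G`_(size r - j)) * (s * x)) (fun j => q^`(j)).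
move=> /= ->.
apply: eq_bigr => -[j Hj] _ /=; congr (_ *: _).
rewrite big_cons -/G coefMXsubC.
case: j Hj => [|j] Hj /=.
  by rewrite subn0 GN mulr0 subr0 addr0.
rewrite subSS.
case: (ltnP j (size r)) => Hjr.
  have -> : (size r - j = (size r - j.+1).+1)%N by rewrite subnSK.
  rewrite ltnS Hjr exprS; ring.
have -> : j = size r by apply/eqP; rewrite eqn_leq Hjr andbT; move: Hj; rewrite !ltnS.
rewrite subnn ltnn exprS; ring.
Qed.


Lemma shift_sumr (K : comNzRingType) n (u w : nat -> K) (A : nat -> K) :
  \sum_(j < n) (u j * A j + w j * A j.+1) =
  \sum_(j < n.+1) ((if (j < n)%N then u j else 0) + (if (j : nat) is j'.+1 then w j' else 0)) * A j.
Proof.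
rewrite big_split /= [RHS](eq_bigr (fun j : 'I_n.+1 => (if (j < n)%N then u j else 0) * A j +
   (if nat_of_ord j is j'.+1 then w j' else 0) * A j)); last by move=> j _; rewrite mulrDl.
rewrite big_split /= big_ord_recr /= ltnn mul0r addr0 big_ord_recl /= mul0r add0r.
by congr (_ + _); apply: eq_bigr => j _ /=; rewrite ?ltn_ord.
Qed.

Definition Rop {K : fieldType} (c : K) (N : nat) (q : {poly K}) : {poly K} :=
  q + (N%:R^-1) *: ((c%:P - 'X) * q^`()).

Fixpoint Phi {K : fieldType} (z0 : K) (c : seq K) (q : {poly K}) : K :=
  match c with [::] => q.[z0] | x :: c' => Phi z0 c' (Rop x (size c) q) end.

Lemma derivn_mulcX (K : fieldType) (c : K) (f : {poly K}) j :
  ((c%:P - 'X) * f)^`(j) = (c%:P - 'X) * f^`(j) - f^`(j.-1) *+ j.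
Proof.
elim: j => [|j IH]; first by rewrite !derivn0 mulr0n subr0.
rewrite derivnS IH derivB derivMn derivM derivB derivC derivX sub0r mulN1r.
case: j {IH} => [|j] /=; first by rewrite mulr0n subr0 mulr1n; ring.
set a := (f^`(j))^`(); set b := a^`().
rewrite [in RHS]mulrSr; ring.
Qed.

Lemma Rop_derivn (K : fieldType) (c : K) N (q : {poly K}) j z0 :
  ((Rop c N q)^`(j)).[z0] = (q^`(j)).[z0] + N%:R^-1 * ((c - z0) * (q^`(j.+1)).[z0] - j%:R * (q^`(j)).[z0]).
Proof.
rewrite /Rop derivnD derivnZ derivn_mulcX !hornerE.
have -> : (q^`())^`(j.-1) *+ j = q^`(j) *+ j.
  by case: j => [|j] //=; rewrite -derivSn.
by rewrite -derivSn hornerMn mulr_natl.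
Qed.

Lemma Phi_id (K : numFieldType) (z0 s : K) (r : seq K) (q : {poly K}) :
  Phi z0 (map (fun x => z0 - s * x) r) q = \sum_(j < (size r).+1)
    (s ^+ j * (\prod_(x <- r) ('X - x%:P))`_(size r - j) / ((size r) ^_ j)%:R) * (q^`(j)).[z0].
Proof.
elim: r q => [|x r IH] q /=.
  by rewrite big_ord_recl big_ord0 addr0 big_nil coefC /= mulr1 mul1r invr1 mul1r.
rewrite size_map IH.
set G := \prod_(y <- r) ('X - y%:P).
set n := size r.
have Gs : size G = n.+1 by rewrite size_prod_XsubC.
have GN : G`_n.+1 = 0 by rewrite nth_default // Gs.
set beta := fun j : nat => s ^+ j * G`_(n - j) / (n ^_ j)%:R.
rewrite (eq_bigr (fun j : 'I_n.+1 => (beta j * (1 - n.+1%:R^-1 * j%:R)) * (q^`(j)).[z0] +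
      (beta j * n.+1%:R^-1 * (- (s * x))) * (q^`(j.+1)).[z0])); last first.
  by move=> j _; rewrite Rop_derivn /beta; ring.
have := @shift_sumr _ n.+1 (fun j => beta j * (1 - n.+1%:R^-1 * j%:R)) (fun j => beta j * n.+1%:R^-1 * (- (s * x))) (fun j => (q^`(j)).[z0]).
move=> /= ->.
apply: eq_bigr => -[j Hj] _ /=; congr (_ * _).
rewrite big_cons -/G coefMXsubC /beta.
have nz : forall m, (m <= n.+1)%N -> (n.+1 ^_ m)%:R != 0 :> K.
  by move=> m Hm; rewrite pnatr_eq0 -lt0n ffact_gt0.
have nz' : forall m, (m <= n)%N -> (n ^_ m)%:R != 0 :> K.
  by move=> m Hm; rewrite pnatr_eq0 -lt0n ffact_gt0.
have N0 : (n.+1%:R : K) != 0 by rewrite pnatr_eq0.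
case: j Hj => [|j] Hj /=.
  by rewrite subn0 GN mulr0 subr0 addr0 !ffactn0 !invr1 !mulr1 mulr0 subr0.
rewrite subSS ffactSS natrM.
case: (ltnP j n) => Hjr.
  have -> : (n - j = (n - j.+1).+1)%N by rewrite subnSK.
  rewrite ltnS Hjr ffactnSr natrM natrB; last exact: ltnW.
  have A1 := nz' j (ltnW Hjr).
  have A2 : (n%:R - j%:R : K) != 0 by rewrite -natrB ?pnatr_eq0 ?subn_eq0 -?ltnNge // ltnW.
  rewrite exprS; field.
  by rewrite A1 A2 nat1r N0.
have Ej : j = n by apply/eqP; rewrite eqn_leq Hjr andbT; move: Hj; rewrite !ltnS.
subst j.
have A1 := nz' n (leqnn n).
rewrite subnn ltnn exprS; field.
by rewrite A1 nat1r N0.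
Qed.


Lemma cs_sum (R : realFieldType) (I : Type) (s : seq I) (F : I -> R) :
  (\sum_(i <- s) F i) ^+ 2 <= (size s)%:R * \sum_(i <- s) F i ^+ 2.
Proof.
elim: s => [|x s IH]; first by rewrite !big_nil expr0n mul0r.
rewrite !big_cons /=.
set A := \sum_(i <- s) F i; set B := \sum_(i <- s) F i ^+ 2.
set m := (size s)%:R : R.
have m0 : 0 <= m by apply: ler0n.
rewrite -natr1 -/m.
have HB : A ^+ 2 <= m * B by [].
have B0 : 0 <= B by rewrite /B; elim: (s) => [|y t IHt]; rewrite ?big_nil ?big_cons //; apply: addr_ge0 => //; exact: sqr_ge0.
have h1 : 0 <= (A - m * F x) ^+ 2 := sqr_ge0 _.
have [m0'|mp] := eqVneq m 0.
  have HA : A ^+ 2 <= 0 by move: HB; rewrite m0' mul0r.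
  have A0 : A = 0 by apply/eqP; rewrite -sqrf_eq0 eq_le HA sqr_ge0.
  rewrite A0 m0'; nra.
have mpos : 0 < m by rewrite lt_def mp m0.
nra.
Qed.

Section Stab.
Variable R : realType.
Local Notation C := (R[i]).
Local Notation toC := (real_complex R).

Lemma size_Rop (c : C) (N : nat) (q : {poly C}) : (0 < N)%N ->
  (size q <= N.+1)%N -> (size (Rop c N q) <= N)%N.
Proof.
move=> N0 Hq; apply/leq_sizeP => j Hj.
rewrite /Rop coefD coefZ mulrBl coefB coefXM coefCM !coef_deriv.
have -> : q`_j.+1 = 0 by rewrite nth_default // (leq_trans Hq).
case: j Hj => [|j] Hj; first by move: Hj; rewrite leqn0 => /eqP Ne; move: N0; rewrite Ne.
rewrite mul0rn mulr0 sub0r /=.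
have [Ej|Nj] := eqVneq j.+1 N.
  rewrite -Ej mulrN -(mulr_natl (q`_j.+1)) mulrA mulVf ?mul1r ?subrr //.
  by rewrite pnatr_eq0.
have -> : q`_j.+1 = 0 by rewrite nth_default // (leq_trans Hq) // ltn_neqAle eq_sym Nj Hj.
by rewrite mul0rn oppr0 mulr0 addr0.
Qed.


Lemma aux1 (F : realFieldType) (p q b : F) : 0 < p ^+ 2 + q ^+ 2 ->
  b * ((p / (p ^+ 2 + q ^+ 2)) ^+ 2 + (- q / (p ^+ 2 + q ^+ 2)) ^+ 2) + - q / (p ^+ 2 + q ^+ 2)
  = (b - q) / (p ^+ 2 + q ^+ 2).
Proof. move=> H; field; by rewrite gt_eqF. Qed.

Lemma term_neg (w y : C) (t : R) : t <= cIm w -> cIm y < t ->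
  (cIm w - t) * (cRe ((w - y)^-1) ^+ 2 + cIm ((w - y)^-1) ^+ 2) + cIm ((w - y)^-1) < 0.
Proof.
move=> Hw Hy.
rewrite cReV cImV.
have hq : cIm (w - y) = cIm w - cIm y by rewrite cImB.
have qpos : 0 < cIm (w - y) by rewrite hq; lra.
have Dpos : 0 < cRe (w - y) ^+ 2 + cIm (w - y) ^+ 2.
  by apply: ltr_wpDl; [exact: sqr_ge0 | exact: exprn_gt0].
rewrite aux1 // pmulr_llt0 ?invr_gt0 // hq; lra.
Qed.

Lemma stab_phi (c : C) (N : nat) (q : {poly C}) (t : R) : (0 < N)%N ->
  (size q <= N.+1)%N -> cIm c = t ->
  (forall w, t <= cIm w -> ~~ root q w) ->
  forall w, t <= cIm w -> ~~ root (Rop c N q) w.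
Proof.
move=> N0 Hq Hc Hroot w Hw.
have q0 : q != 0.
  apply/negP => /eqP q0; have := Hroot (0 +i* t)%C; rewrite q0 root0 /=.
  by move/(_ (lexx t)).
have [rs Hrs] := @closed_field_poly_normal (R[i] : closedFieldType) q.
have lc0 : lead_coef q != 0 by rewrite lead_coef_eq0.
have Hy : forall y, y \in rs -> w != y /\ cIm y < t.
  move=> y yin; have : root q y by rewrite Hrs rootZ // root_prod_XsubC.
  have [Hy|Hy] := lerP t (cIm y); first by move: (Hroot y Hy) => /negP.
  move=> _; split => //.
  by apply/eqP => E; move: Hy; rewrite -E; lra.
have Hm : (size rs <= N)%N.
  by move: Hq; rewrite Hrs size_scale // size_prod_XsubC ltnS.
have Hqw := Hroot w Hw; rewrite /root in Hqw.
set S := \sum_(y <- rs) (w - y)^-1.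
have Hd : q^`().[w] = q.[w] * S.
  rewrite Hrs derivZ !hornerZ logder; first by rewrite mulrA.
  by move=> y /Hy [].
have HR : (Rop c N q).[w] = q.[w] + N%:R^-1 * ((c - w) * (q.[w] * S)).
  by rewrite /Rop hornerD hornerZ hornerM -Hd; congr (_ + _ * (_ * _)); rewrite !hornerE.
rewrite /root HR.
apply/negP => /eqP E.
set u := w - c.
have NC0 : (N%:R : C) != 0 by rewrite pnatr_eq0 -lt0n.
have E2 : u * S = N%:R.
  move/(congr1 (fun z => N%:R * z)): E; rewrite mulr0 => E.
  have : q.[w] * (N%:R + (c - w) * S) = 0.
    by rewrite -E; field.
  move/eqP; rewrite mulf_eq0 (negbTE Hqw) /= => /eqP E3.
  rewrite /u; apply/eqP; rewrite -subr_eq0; apply/eqP; rewrite -[RHS]oppr0 -E3; ring.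
have u0 : u != 0 by apply/eqP => u0; move: E2; rewrite u0 mul0r => /eqP; rewrite eq_sym (negbTE NC0).
have ES : S = N%:R * u^-1 by rewrite -E2 mulrC mulrA mulVf ?mul1r.
set X := cRe S; set Y := cIm S.
set b := cIm w - t.
have b0 : 0 <= b by rewrite /b; lra.
have Imu : cIm u = b by rewrite /u cImB Hc.
set A := cRe u.
set D := A ^+ 2 + b ^+ 2.
have D0 : 0 < D.
  rewrite /D lt_def; apply/andP; split; last by apply: addr_ge0; exact: sqr_ge0.
  apply/negP => /eqP D0; move/eqP: u0; apply.
  have A0 : A = 0 by apply/eqP; rewrite -sqrf_eq0; apply/eqP; nra.
  have B0 : b = 0 by apply/eqP; rewrite -sqrf_eq0; apply/eqP; nra.
  by move: A0 B0 Imu; rewrite /A; case: (u) => a1 a2 /= -> -> ->.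
have HX : X = N%:R * (A / D) by rewrite /X ES cReM cRen cImn mul0r subr0 cReV Imu.
have HY : Y = N%:R * (- b / D) by rewrite /Y ES cImM cRen cImn mul0r addr0 cImV Imu.
set P := \sum_(y <- rs) cRe ((w - y)^-1) ^+ 2.
set Q := \sum_(y <- rs) cIm ((w - y)^-1) ^+ 2.
have HXs : X = \sum_(y <- rs) cRe ((w - y)^-1) by rewrite /X /S cRe_sum.
have HYs : Y = \sum_(y <- rs) cIm ((w - y)^-1) by rewrite /Y /S cIm_sum.
have CSX : X ^+ 2 <= (size rs)%:R * P by rewrite HXs; apply: cs_sum.
have CSY : Y ^+ 2 <= (size rs)%:R * Q by rewrite HYs; apply: cs_sum.
have P0 : 0 <= P by rewrite /P; elim: (rs) => [|y l IHl]; rewrite ?big_nil ?big_cons //; apply: addr_ge0 => //; exact: sqr_ge0.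
have Q0 : 0 <= Q by rewrite /Q; elim: (rs) => [|y l IHl]; rewrite ?big_nil ?big_cons //; apply: addr_ge0 => //; exact: sqr_ge0.
have [rs0|rsn] := eqVneq rs [::].
  by move: E2; rewrite /S rs0 big_nil mulr0 => /eqP; rewrite eq_sym (negbTE NC0).
have Fneg : \sum_(y <- rs) (b * (cRe ((w - y)^-1) ^+ 2 + cIm ((w - y)^-1) ^+ 2) + cIm ((w - y)^-1)) < 0.
  apply: sum_neg => // y yin; apply: term_neg => //; by case: (Hy y yin).
have Fsum : \sum_(y <- rs) (b * (cRe ((w - y)^-1) ^+ 2 + cIm ((w - y)^-1) ^+ 2) + cIm ((w - y)^-1)) = b * (P + Q) + Y.
  by rewrite big_split /= -mulr_sumr big_split /= HYs.
have Nr : (size rs)%:R <= N%:R :> R by rewrite ler_nat.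
have Npos : 0 < N%:R :> R by rewrite ltr0n.
have h1 : X ^+ 2 + Y ^+ 2 = N%:R ^+ 2 / D.
  rewrite HX HY /D; field; rewrite -/D gt_eqF //.
have h2 : b * (X ^+ 2 + Y ^+ 2) + N%:R * Y = 0.
  rewrite h1 HY; field; rewrite gt_eqF //.
have h3 : X ^+ 2 + Y ^+ 2 <= N%:R * (P + Q).
  have : (size rs)%:R * (P + Q) <= N%:R * (P + Q) by apply: ler_wpM2r => //; apply: addr_ge0.
  nra.
have h4 : b * (X ^+ 2 + Y ^+ 2) <= b * (N%:R * (P + Q)) by apply: ler_wpM2l.
have h5 : N%:R * (b * (P + Q) + Y) < 0.
  rewrite pmulr_rlt0 //; by rewrite -Fsum.
nra.
Qed.


Lemma stab_Phi (z0 : C) (cs : seq C) (q : {poly C}) :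
  (forall c, c \in cs -> cIm c = cIm z0) -> (size q <= (size cs).+1)%N ->
  (forall w, cIm z0 <= cIm w -> ~~ root q w) -> Phi z0 cs q != 0.
Proof.
elim: cs q => [|x cs IH] q Hc Hs Hr /=.
  by have := Hr z0 (lexx _).
apply: IH.
- by move=> c cin; apply: Hc; rewrite inE cin orbT.
- by apply: size_Rop.
- apply: stab_phi => //; by apply: Hc; rewrite inE eqxx.
Qed.

Lemma stab_Psi (s : R) (r : seq R) (q : {poly C}) :
  (forall w, 0 < cIm w -> ~~ root q w) ->
  forall w, 0 < cIm w -> ~~ root (Psi (s%:C) (map toC r) q) w.
Proof.
elim: r q => [|x r IH] q Hq //=.
apply: IH; rewrite -rmorphM; exact: stab_psi.
Qed.

End Stab.


Section Main.
Variable R : realType.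
Variable d : nat.

Lemma monic_coef_top (b : 'rV[R]_d) : (monic_of b)`_d = 1.
Proof.
rewrite /monic_of coefD coefXn eqxx coef_sum big1 ?addr0 // => k _.
rewrite coefZ coefXn.
have -> : (d == d - k.+1)%N = false.
  by apply/negbTE; have := ltn_ord k; lia.
by rewrite mulr0.
Qed.

Lemma monic_coef (b : 'rV[R]_d) (k : 'I_d) : (monic_of b)`_(d - k.+1) = b 0 k.
Proof.
rewrite /monic_of coefD coefXn.
have -> : (d - k.+1 == d)%N = false.
  by apply/negbTE; have := ltn_ord k; lia.
rewrite add0r coef_sum (bigD1 k) //= coefZ coefXn eqxx mulr1 big1 ?addr0 // => j jk.
rewrite coefZ coefXn.
have -> : (d - k.+1 == d - j.+1)%N = false.
  apply/negbTE; apply: contra jk => /eqP E; apply/eqP; apply: val_inj => /=.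
  have h1 := ltn_ord k; have h2 := ltn_ord j; lia.
by rewrite mulr0.
Qed.

Lemma monic_size (b : 'rV[R]_d) : size (monic_of b) = d.+1.
Proof.
apply/eqP; rewrite eqn_leq; apply/andP; split.
  apply/leq_sizeP => j Hj.
  rewrite /monic_of coefD coefXn gtn_eqF // add0r coef_sum big1 // => k _.
  rewrite coefZ coefXn.
  have -> : (j == d - k.+1)%N = false.
    by apply/negbTE; lia.
  by rewrite mulr0.
rewrite ltnNge; apply/negP => H; move: (monic_coef_top b).
by rewrite nth_default // => /eqP; rewrite eq_sym oner_eq0.
Qed.

Lemma H1_decomp (b : 'rV[R]_d) : H1 b ->
  exists r : seq R, size r = d /\ monic_of b = \prod_(x <- r) ('X - x%:P).
Proof.
move=> [r Hr]; exists r.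
have lc : lead_coef (monic_of b) = 1 by rewrite lead_coefE monic_size monic_coef_top.
move: Hr; rewrite lc scale1r => Hr; split => //.
by have := monic_size b; rewrite Hr size_prod_XsubC => -[].
Qed.


Local Notation C := (R[i]).
Local Notation toC := (real_complex R).

Lemma no_upper_hyp (P : {poly R}) :
  (forall z : C, 0 < cIm z -> ~~ root (map_poly toC P) z) -> hyperbolic P.
Proof.
move=> H; apply: hyp_of_roots => z Hz.
have [Hlt|Hgt|//] := ltgtP (cIm z) 0.
  have Hc : 0 < cIm (z^*)%C by move: Hlt; case: (z) => a b /=; rewrite oppr_gt0.
  by move: (H _ Hc); rewrite (@root_conj R _ _ Hz).
by move: (H z Hgt); rewrite Hz.
Qed.

Lemma mapP_eval (a : 'rV[R]_d) (p : {poly R}) (s : R) (z0 : C) :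
  (map_poly toC (p + \sum_(k < d) (a 0 k * s ^+ k.+1) *: p^`(k.+1))).[z0] =
  (map_poly toC p).[z0] + \sum_(k < d) toC (a 0 k * s ^+ k.+1) * ((map_poly toC p)^`(k.+1)).[z0].
Proof.
rewrite rmorphD rmorph_sum hornerD horner_sum; congr (_ + _); apply: eq_bigr => k _.
by rewrite /= map_polyZ hornerZ derivn_map deriv_map.
Qed.

Lemma partB (a : 'rV[R]_d) : H1 (bmap a) -> Nuij a.
Proof.
move=> /H1_decomp [r [sr Hr]] p Hsp Hp s.
apply: no_upper_hyp => z0 Hz0.
have p0 : p != 0 by rewrite -size_poly_eq0 Hsp.
set cs := map (fun x => z0 - toC s * x) (map toC r).
have key : (map_poly toC (p + \sum_(k < d) (a 0 k * s ^+ k.+1) *: p^`(k.+1))).[z0] =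
           Phi z0 cs (map_poly toC p).
  rewrite mapP_eval /cs Phi_id size_map sr big_ord_recl /=.
  have HG : \prod_(x <- map toC r) ('X - x%:P) = map_poly toC (monic_of (bmap a)).
    by rewrite Hr rmorph_prod big_map; apply: eq_bigr => x _; rewrite /= map_polyXsubC.
  rewrite HG coef_map subn0 monic_coef_top expr0 mul1r.
  congr (_ + _); first by rewrite divr1 -[LHS]mul1r.
  apply: eq_bigr => k _.
  rewrite /bump leq0n add1n add0n coef_map monic_coef /bmap mxE.
  congr (_ * _).
  have nz : (d ^_ k.+1)%:R != 0 :> C by rewrite pnatr_eq0 -lt0n ffact_gt0 ltn_ord.
  move: nz; set m := d ^_ k.+1 => nz.
  rewrite (rmorphM toC) (rmorphXn toC) mulr_natl raddfMn -mulr_natl /=; field; exact: nz.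
rewrite /root key; apply: stab_Phi.
- by move=> c /mapP [x /mapP [y _ ->] ->]; rewrite cImB -rmorphM /=; lra.
- by rewrite size_map_poly Hsp !size_map sr.
- move=> w Hw; apply/negP => Hroot.
  have := @roots_of_hyp R p p0 Hp w Hroot; lra.
Qed.


Lemma partC (b : 'rV[R]_d) : H1 b -> Nuij b.
Proof.
move=> /H1_decomp [r [sr Hr]] p Hsp Hp s.
apply: no_upper_hyp.
have p0 : p != 0 by rewrite -size_poly_eq0 Hsp.
have key : map_poly toC (p + \sum_(k < d) (b 0 k * s ^+ k.+1) *: p^`(k.+1)) =
           Psi (toC s) (map toC r) (map_poly toC p).
  rewrite Psi_id size_map sr big_ord_recl.
  have HG : \prod_(x <- map toC r) ('X - x%:P) = map_poly toC (monic_of b).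
    by rewrite Hr rmorph_prod big_map; apply: eq_bigr => x _; rewrite /= map_polyXsubC.
  rewrite HG coef_map subn0 monic_coef_top expr0 mul1r rmorphD rmorph_sum.
  congr (_ + _); first by rewrite derivn0 -[LHS]scale1r.
  apply: eq_bigr => k _.
  rewrite !lift0 coef_map monic_coef.
  rewrite /= map_polyZ derivn_map; congr (_ *: _).
  by rewrite (rmorphM toC) (rmorphXn toC) mulrC.
  by rewrite deriv_map.
rewrite key; apply: stab_Psi => w Hw; apply/negP => Hroot.
have := @roots_of_hyp R p p0 Hp w Hroot; lra.
Qed.

Lemma partA (a : 'rV[R]_d) : Nuij a -> H1 (bmap a).
Proof.
move=> H.
have Hs : size ('X^d : {poly R}) = d.+1 by rewrite size_polyXn.
have Hh : hyperbolic ('X^d : {poly R}).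
  exists (nseq d 0); rewrite lead_coefXn scale1r.
  elim: d {H Hs a} => [|n IH]; first by rewrite big_nil expr0.
  by rewrite /= big_cons subr0 exprS IH.
have := H _ Hs Hh 1.
rewrite /H1 /monic_of.
congr hyperbolic; congr (_ + _); apply: eq_bigr => k _.
by rewrite derivnXn expr1n mulr1 /bmap mxE -scaler_nat scalerA mulrC.
Qed.
End Main.

End Helpers.

Local Open Scope ring_scope.

Theorem corollary2p4 (R : realType) (d : nat) (hd : (1 <= d)%N) :
  (forall b : 'rV[R]_d, H1 b -> Nuij b) /\
  (forall a : 'rV[R]_d, Nuij a <-> H1 (bmap a)).
Proof.
split; first exact: (@partC R d).
move=> a; split; [exact: (@partA R d) | exact: (@partB R d)].
Qed.
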